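(* Let $(G,R)$ be a multirooted graph, let $c$ be a healthy partial colouring, and let $c'$ be a partial colouring extending $c$ such that $\mathrm{dom}(c')\setminus\mathrm{dom}(c)$ is finite and contains no symptoms of $c'$. Then $c'$ is healthy.
   Context: All graphs are simple, connected and locally finite. A multirooted graph $(G,R)$ is a graph $G=(V,E)$ together with a set $R\subseteq V$ of roots. A partial colouring is a function $c$ from a set $\mathrm{dom}(c)\subseteq V$ to a set of colours (containing a distinguished colour $0$); $c'$ extends $c$ if $\mathrm{dom}(c)\subseteq\mathrm{dom}(c')$ and $c'$ agrees with $c$ on $\mathrm{dom}(c)$. For $v\in\mathrm{dom}(c)$, the monochromatic component of $v$ is the set of vertices reachable from $v$ by a path all of whose vertices are coloured (in $\mathrm{dom}(c)$) with the colour $c(v)$. A monochromatic component $K$ is healthy if at least one of the following holds: (i) the vertices of $K$ do not have colour $0$; (ii) $K\cap R\neq\emptyset$; (iii) $K$ is finite and $K$ has no uncoloured neighbours; (iv) some vertex of $K$ has at least $4$ neighbours in $K$. Otherwise $K$ is unhealthy. A colouring is healthy if all its monochromatic components are healthy. A symptom of $c$ is either a vertex lying in an unhealthy monochromatic component that has an uncoloured neighbour outside $R$, or an unhealthy infinite monochromatic component. A colouring is healthy iff it has no symptoms. *)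

(* Defs.v *)
(* graphs may be infinite, so we work with an arbitrary vertex
   type V and a Prop-valued adjacency relation. *)
From Stdlib Require Import List Arith.
Import ListNotations.

Section Graphs.
Variable V : Type.

Inductive reach (adj : V -> V -> Prop) : V -> V -> Prop :=
| reach_refl v : reach adj v v
| reach_step v w x : reach adj v w -> adj w x -> reach adj v x.

Definition finite_set (P : V -> Prop) : Prop :=
  exists l : list V, forall x, P x -> In x l.

Definition is_graph (adj : V -> V -> Prop) : Prop :=
  (forall u v, adj u v -> adj v u) /\
  (forall v, ~ adj v v) /\
  (forall u v, reach adj u v) /\
  (forall v, finite_set (adj v)).

Variable C : Type.
Variable c0 : C.

Definition colouring := V -> option C.

Definition dom (c : colouring) (v : V) : Prop := c v <> None.

Definition extends (c c' : colouring) : Prop :=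
  forall v k, c v = Some k -> c' v = Some k.

Variable adj : V -> V -> Prop.
Variable R : V -> Prop.

Inductive mono_reach (c : colouring) (k : C) (v : V) : V -> Prop :=
| mono_refl : c v = Some k -> mono_reach c k v v
| mono_step w x : mono_reach c k v w -> adj w x -> c x = Some k ->
                  mono_reach c k v x.

Definition mono_comp (c : colouring) (v : V) : V -> Prop :=
  fun w => exists k, c v = Some k /\ mono_reach c k v w.

Definition healthy_comp (c : colouring) (v : V) : Prop :=
  let K := mono_comp c v in
  (c v <> Some c0) \/
  (exists r, R r /\ K r) \/
  (finite_set K /\ ~ (exists w u, K w /\ adj w u /\ c u = None)) \/
  (exists w, K w /\ exists l : list V,
      NoDup l /\ 4 <= length l /\ forall u, In u l -> adj w u /\ K u).

Definition healthy (c : colouring) : Prop :=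
  forall v, dom c v -> healthy_comp c v.

Definition vertex_symptom (c : colouring) (v : V) : Prop :=
  dom c v /\ ~ healthy_comp c v /\ ~ R v /\
  exists u, adj v u /\ c u = None.

Definition component_symptom (c : colouring) (K : V -> Prop) : Prop :=
  exists v, dom c v /\ (forall w, K w <-> mono_comp c v w) /\
    ~ healthy_comp c v /\ ~ finite_set K.

End Graphs.

(* Main.v *)
Require Import Defs.
From Stdlib Require Import List Arith Classical.

Section L.
Variable V : Type.
Variable C : Type.
Variable adj : V -> V -> Prop.

Lemma mr_col (c : colouring V C) k v w :
  mono_reach V C adj c k v w -> c v = Some k /\ c w = Some k.
Proof. induction 1; intuition. Qed.

Lemma mr_trans (c : colouring V C) k v w x :
  mono_reach V C adj c k v w -> mono_reach V C adj c k w x -> mono_reach V C adj c k v x.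
Proof. intros H1 H2; induction H2; auto. eapply mono_step; eauto. Qed.

Lemma mr_sym (c : colouring V C) k v w :
  (forall u v, adj u v -> adj v u) ->
  mono_reach V C adj c k v w -> mono_reach V C adj c k w v.
Proof.
  intros Hs H; induction H. constructor; auto.
  eapply mr_trans; [|exact IHmono_reach].
  eapply mono_step. constructor; auto. apply Hs; auto. apply (mr_col _ _ _ _ H).
Qed.

Lemma mr_ext (c c' : colouring V C) k v w :
  extends V C c c' -> mono_reach V C adj c k v w -> mono_reach V C adj c' k v w.
Proof. intros He H; induction H. constructor; auto. eapply mono_step; eauto. Qed.

Lemma comp_eq (c : colouring V C) v w :
  (forall u v, adj u v -> adj v u) ->
  mono_comp V C adj c v w -> c v = c w /\ forall x, mono_comp V C adj c v x <-> mono_comp V C adj c w x.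
Proof.
  intros Hs [k [Hk Hr]]. destruct (mr_col _ _ _ _ Hr) as [_ Hw].
  split. congruence.
  intro x; split; intros [k' [Hk' Hx]].
  - exists k; split; auto. rewrite Hk in Hk'; inversion Hk'; subst.
    eapply mr_trans; [apply mr_sym; eauto|]; eauto.
  - exists k; split; auto. rewrite Hw in Hk'; inversion Hk'; subst.
    eapply mr_trans; eauto.
Qed.

Lemma transfer c0 R (c : colouring V C) v w :
  c v = c w -> (forall x, mono_comp V C adj c v x <-> mono_comp V C adj c w x) ->
  healthy_comp V C c0 adj R c v -> healthy_comp V C c0 adj R c w.
Proof.
  intros He Hx H; unfold healthy_comp in *; rewrite <- He.
  destruct H as [H|[[r [Hr Hk]]|[[[l Hl] Hn]|[w' [Hw' [l [Hd [Hl Hu]]]]]]]].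
  - left; auto.
  - right; left; exists r; split; auto; apply Hx; auto.
  - right; right; left; split. exists l; intros; apply Hl, Hx; auto.
    intros [a [b [H1 H2]]]; apply Hn; exists a, b; rewrite Hx; auto.
  - right; right; right; exists w'; split. apply Hx; auto.
    exists l; repeat split; auto. apply Hu; auto. apply Hx, Hu; auto.
Qed.
End L.

Theorem lemma3p2 (V : Type) (adj : V -> V -> Prop) (R : V -> Prop)
  (C : Type) (c0 : C) (c c' : colouring V C) :
  is_graph V adj ->
  healthy V C c0 adj R c ->
  extends V C c c' ->
  finite_set V (fun v => dom V C c' v /\ ~ dom V C c v) ->
  (forall v, dom V C c' v -> ~ dom V C c v ->
     ~ vertex_symptom V C c0 adj R c' v) ->
  (forall K, component_symptom V C c0 adj R c' K ->
     ~ (forall w, K w -> dom V C c' w /\ ~ dom V C c w)) ->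
  healthy V C c0 adj R c'.
Proof.
  intros [Hs _] Hh He Hf Hv _ v Hd.
  destruct (c' v) as [k|] eqn:Hk; [|exfalso; apply Hd; auto].
  destruct (classic (exists w, mono_comp V C adj c' v w /\ dom V C c w)) as [[w [Hw Hdw]]|Hn].
  - destruct (comp_eq _ _ _ c' v w Hs Hw) as [E1 E2].
    apply (transfer _ _ _ c0 R c' w v); [congruence| intro x; symmetry; auto |].
    destruct Hw as [k1 [Hk1 Hr]]. destruct (mr_col _ _ _ _ _ _ _ Hr) as [_ Hcw].
    destruct (c w) as [k'|] eqn:Hcw0; [|exfalso; apply Hdw; auto].
    assert (Hcw' := He _ _ Hcw0). rewrite Hcw' in Hcw; inversion Hcw; subst k'.
    specialize (Hh w Hdw). unfold healthy_comp in *.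
    destruct Hh as [H|[[r [Hr' Hkr]]|[[[l Hl] Hnn]|[w' [Hw' [l [Hdl [Hl Hu]]]]]]]].
    + left; congruence.
    + right; left; exists r; split; auto. destruct Hkr as [kk [E Hm]].
      exists kk; split; [congruence|]. eapply mr_ext; eauto.
    + assert (Sub : forall x, mono_reach V C adj c' k1 w x -> mono_reach V C adj c k1 w x).
      { induction 1. constructor; auto.
        destruct (c x) as [kx|] eqn:Ex.
        - assert (He' := He _ _ Ex). rewrite H1 in He'; inversion He'; subst.
          eapply mono_step; eauto.
        - exfalso; apply Hnn; exists w0, x; repeat split; auto.
          exists k1; auto. }
      assert (Sub' : forall x, mono_comp V C adj c' w x -> mono_comp V C adj c w x).
      { intros x [kk [E Hm]]. rewrite Hcw' in E; inversion E; subst.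
        exists kk; split; auto. }
      right; right; left; split.
      * exists l; intros; apply Hl, Sub'; auto.
      * intros [a [b [H1 [H2 H3]]]]. apply Hnn; exists a, b; repeat split; auto.
        destruct (c b) eqn:Eb; auto. rewrite (He _ _ Eb) in H3; discriminate.
    + assert (Up : forall x, mono_comp V C adj c w x -> mono_comp V C adj c' w x).
      { intros x [kk [E Hm]]. exists kk; split; [congruence|]. eapply mr_ext; eauto. }
      right; right; right; exists w'; split; auto.
      exists l; repeat split; auto. apply Hu; auto. apply Up, Hu; auto.
  - destruct (classic (healthy_comp V C c0 adj R c' v)) as [H|H]; auto. exfalso.
    assert (Kin : forall x, mono_comp V C adj c' v x -> dom V C c' x /\ ~ dom V C c x).
    { intros x Hx; split.
      - destruct Hx as [kk [_ Hm]]. destruct (mr_col _ _ _ _ _ _ _ Hm) as [_ E].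
        unfold dom; congruence.
      - intro Hdx; apply Hn; eauto. }
    assert (Fin : finite_set V (mono_comp V C adj c' v)).
    { destruct Hf as [l Hl]; exists l; intros; apply Hl, Kin; auto. }
    assert (Ex : exists w u, mono_comp V C adj c' v w /\ adj w u /\ c' u = None).
    { apply NNPP; intro Hne. apply H; right; right; left; auto. }
    destruct Ex as [w [u [Hw [Ha Hu]]]].
    destruct (comp_eq _ _ _ c' v w Hs Hw) as [E1 E2].
    destruct (Kin w Hw) as [D1 D2].
    apply (Hv w D1 D2). repeat split; auto.
    + intro Hh'. apply H. apply (transfer _ _ _ c0 R c' w v); [congruence| intro x; symmetry; auto | auto].
    + intro Hr. apply H; right; left; exists w; auto.
    + exists u; auto.
Qed.
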